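(* Under Plurality, $2$-by-$2$ GS-games of types (ii), (iii), (iv) and (v) are realizable, while $2$-by-$2$ GS-games of types (i) and (vi) are not realizable. That is, for each of the types (ii)–(v) there exist a finite candidate set, a tie-breaking order, a profile $V$ and a $2$-by-$2$ GS-game for $V$ under Plurality of that type, and no $2$-by-$2$ GS-game under Plurality (for any candidate set, tie-breaking order and profile) is of type (i) or (vi).
   Context: Each voter $i$ has a strict linear order $v_i$ over the candidate set $C$. Plurality: each candidate gets one point from each voter ranking her first; the highest score wins, ties broken in favour of the candidate highest in a fixed strict linear order $>$ on $C$. Write $\mathcal{R}$ for the rule and $(V_{-i},v_i')$ for $V$ with $v_i$ replaced by $v_i'$. A GS-manipulation of voter $i$ at $V$ is a vote $v_i'$ such that $i$ strictly prefers $\mathcal{R}(V_{-i},v_i')$ to $\mathcal{R}(V)$ and for every vote $v_i''$ either $\mathcal{R}(V_{-i},v_i'')=\mathcal{R}(V_{-i},v_i')$ or $i$ strictly prefers $\mathcal{R}(V_{-i},v_i')$ to $\mathcal{R}(V_{-i},v_i'')$; $i$ is a GS-manipulator if he has one. A GS-game for $V$ has as players all GS-manipulators at $V$, each player $i$ having action set consisting of $v_i$ and a subset of his GS-manipulations; other voters vote sincerely; players compare action profiles by their preferences over the resulting winners. A $2$-by-$2$ GS-game is one with exactly two players $1,2$ (i.e. exactly two GS-manipulators at $V$), with action sets $\{s_1,i_1\}$ and $\{s_2,i_2\}$ where $s_p=v_p$ is the sincere vote and $i_p$ a GS-manipulation. Let $W(a,b)$ be the winner when player 1 plays $a$ and player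 2 plays $b$. Define $\rho_1=+$ if player 1 strictly prefers $W(i_1,i_2)$ to $W(s_1,i_2)$, $\rho_1=0$ if $W(i_1,i_2)=W(s_1,i_2)$, $\rho_1=-$ if player 1 strictly prefers $W(s_1,i_2)$ to $W(i_1,i_2)$; define $\rho_2$ analogously for player 2 comparing $W(i_1,i_2)$ with $W(i_1,s_2)$. The type of the game is determined by the unordered pair $\{\rho_1,\rho_2\}$: type (i) $\{+,+\}$, (ii) $\{-,-\}$, (iii) $\{0,0\}$, (iv) $\{+,0\}$, (v) $\{-,0\}$, (vi) $\{+,-\}$. *)

(* Defs.v *)
From mathcomp Require Import all_boot fingroup perm.

Set Implicit Arguments.
Unset Strict Implicit.
Unset Printing Implicit Defensive.

(* A vote (strict linear order on candidates) is a permutation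
   v : 'S_m.+1 mapping each candidate to its POSITION in the ranking,
   position 0 being the top.  The tie-breaking order > is encoded the same way. *)
Definition vote (m : nat) := 'S_m.+1.

Definition prefers (m : nat) (v : vote m) (a b : 'I_m.+1) : bool := v a < v b.

Definition profile (m n : nat) := {ffun 'I_n -> vote m}.

Definition upd (m n : nat) (V : profile m n) (i : 'I_n) (v : vote m) : profile m n :=
  [ffun j => if j == i then v else V j].

Definition score (m n : nat) (V : profile m n) (c : 'I_m.+1) : nat :=
  #|[pred i : 'I_n | V i c == ord0]|.

Definition plurality (m n : nat) (tau : vote m) (V : profile m n) : 'I_m.+1 :=
  let c0 := [arg max_(c > ord0) score V c] in
  [arg min_(c < c0 | [forall d, score V d <= score V c]) tau c].

Definition GS_manipulation (m n : nat) (tau : vote m) (V : profile m n)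
    (i : 'I_n) (v' : vote m) : Prop :=
  prefers (V i) (plurality tau (upd V i v')) (plurality tau V) /\
  forall v'' : vote m,
    plurality tau (upd V i v'') = plurality tau (upd V i v') \/
    prefers (V i) (plurality tau (upd V i v')) (plurality tau (upd V i v'')).

Definition GS_manipulator (m n : nat) (tau : vote m) (V : profile m n) (i : 'I_n) : Prop :=
  exists v', GS_manipulation tau V i v'.

(* A 2-by-2 GS-game for V: players p1 <> p2 are exactly the GS-manipulators
   at V; player p's actions are {V p, i_p} with i_p a GS-manipulation of p. *)
Definition is_2by2_GS_game (m n : nat) (tau : vote m) (V : profile m n)
    (p1 p2 : 'I_n) (i1 i2 : vote m) : Prop :=
  [/\ p1 <> p2,
      (forall i, GS_manipulator tau V i <-> (i = p1 \/ i = p2)),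
      GS_manipulation tau V p1 i1 &
      GS_manipulation tau V p2 i2].

Definition W (m n : nat) (tau : vote m) (V : profile m n)
    (p1 p2 : 'I_n) (a b : vote m) : 'I_m.+1 :=
  plurality tau (upd (upd V p1 a) p2 b).

Inductive sign := Plus | Zero | Minus.

Definition cmp (m : nat) (v : vote m) (x y : 'I_m.+1) : sign :=
  if x == y then Zero else if prefers v x y then Plus else Minus.

Definition rho1 (m n : nat) (tau : vote m) (V : profile m n)
    (p1 p2 : 'I_n) (i1 i2 : vote m) : sign :=
  cmp (V p1) (W tau V p1 p2 i1 i2) (W tau V p1 p2 (V p1) i2).

Definition rho2 (m n : nat) (tau : vote m) (V : profile m n)
    (p1 p2 : 'I_n) (i1 i2 : vote m) : sign :=
  cmp (V p2) (W tau V p1 p2 i1 i2) (W tau V p1 p2 i1 (V p2)).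

Inductive game_type := T_i | T_ii | T_iii | T_iv | T_v | T_vi.

Definition type_of (r1 r2 : sign) : game_type :=
  match r1, r2 with
  | Plus, Plus => T_i
  | Minus, Minus => T_ii
  | Zero, Zero => T_iii
  | Plus, Zero | Zero, Plus => T_iv
  | Minus, Zero | Zero, Minus => T_v
  | Plus, Minus | Minus, Plus => T_vi
  end.

Definition game_type_of (m n : nat) (tau : vote m) (V : profile m n)
    (p1 p2 : 'I_n) (i1 i2 : vote m) : game_type :=
  type_of (rho1 tau V p1 p2 i1 i2) (rho2 tau V p1 p2 i1 i2).

Definition realizable (t : game_type) : Prop :=
  exists (m n : nat) (tau : vote m) (V : profile m n) (p1 p2 : 'I_n) (i1 i2 : vote m),
    is_2by2_GS_game tau V p1 p2 i1 i2 /\ game_type_of tau V p1 p2 i1 i2 = t.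

(* Main.v *)
Require Import Defs.
From mathcomp Require Import all_boot fingroup perm.
Set Implicit Arguments.
Unset Strict Implicit.
Unset Printing Implicit Defensive.

Definition beats (m n : nat) (tau : vote m) (X : profile m n) (a b : 'I_m.+1) : bool :=
  (score X b < score X a) || ((score X b == score X a) && (tau a < tau b)).

Lemma winner_beats m n (tau : vote m) (X : profile m n) d :
  d != plurality tau X -> beats tau X (plurality tau X) d.
Proof.
rewrite /plurality.
case: arg_maxnP => // c0 _ Hc0.
have P0 : [forall d, score X d <= score X c0].
  by apply/forallP => d'; exact: Hc0.
case: arg_minnP => [//|w /forallP Pw Hw dw].
rewrite /beats ltn_neqAle Pw andbT.
case: eqP => //= Hs.
have : tau w <= tau d.
  apply: Hw; apply/forallP => d'; rewrite Hs; exact: Pw.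
rewrite leq_eqVlt => /orP [/eqP/val_inj/perm_inj Hwd|//].
by rewrite Hwd eqxx in dw.
Qed.

Lemma beats_asym m n (tau : vote m) (X : profile m n) a b :
  beats tau X a b -> beats tau X b a -> False.
Proof.
rewrite /beats => /orP [h|/andP [/eqP h1 h2]] /orP [h'|/andP [/eqP h1' h2']].
- by move: (ltn_trans h h'); rewrite ltnn.
- by rewrite h1' ltnn in h.
- by rewrite h1 ltnn in h'.
- by move: (ltn_trans h2 h2'); rewrite ltnn.
Qed.

Lemma plurality_unique m n (tau : vote m) (X : profile m n) w :
  (forall d, d != w -> beats tau X w d) -> plurality tau X = w.
Proof.
move=> H; apply/eqP; apply/negPn/negP => Hne.
have H1 := H _ Hne.
have H2 : beats tau X (plurality tau X) w by apply: winner_beats; rewrite eq_sym.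
exact: beats_asym H1 H2.
Qed.

Lemma beats_mono m n (tau : vote m) (X Y : profile m n) a b :
  beats tau X a b -> score X a <= score Y a -> score Y b <= score X b ->
  beats tau Y a b.
Proof.
rewrite /beats => /orP [h|/andP [/eqP h1 h2]] ha hb.
- by apply/orP; left; apply: (leq_ltn_trans hb); apply: (leq_trans h ha).
- rewrite leq_eqVlt in ha.
  case/orP: ha => [/eqP ha|ha].
  + rewrite leq_eqVlt in hb; case/orP: hb => [/eqP hb|hb].
    * by rewrite -ha hb h1 eqxx h2 orbT.
    * by rewrite -ha -h1 hb.
  + by apply/orP; left; apply: (leq_ltn_trans hb); rewrite h1.
Qed.

Lemma score_upd_ge m n (X : profile m n) (i : 'I_n) (v : vote m) (c : 'I_m.+1) :
  ~~ (X i c == ord0) -> score X c <= score (upd X i v) c.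
Proof.
move=> H; rewrite /score; apply: subset_leq_card; apply/subsetP => j; rewrite !inE /upd ffunE.
by case: (j =P i) => [->|//] h; rewrite h in H.
Qed.

Lemma score_upd_le m n (X : profile m n) (i : 'I_n) (v : vote m) (c : 'I_m.+1) :
  ~~ (v c == ord0) -> score (upd X i v) c <= score X c.
Proof.
move=> H; rewrite /score; apply: subset_leq_card; apply/subsetP => j; rewrite !inE /upd ffunE.
by case: (j =P i) => // _ h; rewrite h in H.
Qed.

Lemma upd_comm m n (X : profile m n) (p q : 'I_n) (i j : vote m) :
  p != q -> upd (upd X p i) q j = upd (upd X q j) p i.
Proof.
move=> pq; apply/ffunP => k; rewrite /upd !ffunE.
case: (eqVneq k q) => [->|kq]; last by [].
by rewrite eq_sym (negbTE pq).
Qed.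

Lemma upd_same m n (X : profile m n) (p : 'I_n) (v : vote m) : X p = v -> upd X p v = X.
Proof. by move=> <-; apply/ffunP => k; rewrite ffunE; case: eqP => // ->. Qed.

Lemma upd_upd m n (X : profile m n) (p : 'I_n) (v v' : vote m) : upd (upd X p v) p v' = upd X p v'.
Proof. by apply/ffunP => k; rewrite !ffunE; case: eqP. Qed.

Lemma neq_top m (v : vote m) (a b : 'I_m.+1) : v a == ord0 -> b != a -> ~~ (v b == ord0).
Proof.
move=> /eqP ha ba; apply/negP => /eqP hb.
by move: ba; rewrite (@perm_inj _ v b a) ?eqxx // ha hb.
Qed.

Section Manip.
Lemma manip_facts m n (tau : vote m) (V : profile m n) p v :
  GS_manipulation tau V p v ->
  [/\ ~~ (V p (plurality tau V) == ord0),
      v (plurality tau (upd V p v)) == ord0 &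
      plurality tau (upd V p v) != plurality tau V].
Proof.
case=> Hpref _.
set w := plurality tau V in Hpref *; set x := plurality tau (upd V p v) in Hpref *.
have xw : x != w by apply/eqP => e; move: Hpref; rewrite /prefers e ltnn.
have a : ~~ (V p w == ord0).
  by apply/negP => /eqP e; move: Hpref; rewrite /prefers e.
split => //.
apply/negPn/negP => b.
have H1 : beats tau (upd V p v) x w by apply: winner_beats; rewrite eq_sym.
have H2 : beats tau V w x by apply: winner_beats.
have H3 : beats tau (upd V p v) w x.
  apply: beats_mono H2 _ _; [exact: score_upd_ge | exact: score_upd_le].
exact: beats_asym H1 H3.
Qed.
End Manip.

Lemma coreA m n (tau : vote m) (V : profile m n) p q i j :
  p != q -> GS_manipulation tau V p i -> GS_manipulation tau V q j ->
  let w := plurality tau V in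
  let xp := plurality tau (upd V p i) in
  let xq := plurality tau (upd V q j) in
  let z := plurality tau (upd (upd V p i) q j) in
  z != xp -> z != xq -> z = w /\ V q xp == ord0.
Proof.
move=> pq Mp Mq w xp xq z zp zq.
have qp : q != p by rewrite eq_sym.
case: (manip_facts Mp) => ap bp cp.
case: (manip_facts Mq) => aq bq cq.
have zw : z = w.
  apply/eqP; apply/negPn/negP => zw.
  have H1 : beats tau V w z by apply: winner_beats.
  have H2 : beats tau (upd (upd V p i) q j) w z.
    apply: beats_mono H1 _ _.
    - apply: (leq_trans (score_upd_ge i ap)).
      apply: score_upd_ge; rewrite /upd ffunE (negbTE (qp)); exact: aq.
    - apply: (leq_trans (score_upd_le _ _ (neq_top bq zq))).
      exact: score_upd_le (neq_top bp zp).
  have H3 : beats tau (upd (upd V p i) q j) z w by apply: winner_beats; rewrite eq_sym.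
  by case: (beats_asym H2 H3).
split => //.
apply/negPn/negP => nq.
have H1 : beats tau (upd V p i) xp w by apply: winner_beats; rewrite eq_sym.
have H2 : beats tau (upd (upd V p i) q j) xp w.
  apply: beats_mono H1 _ _.
  - apply: score_upd_ge; rewrite /upd ffunE (negbTE (qp)); exact: nq.
  - apply: score_upd_le; apply: (neq_top bq); rewrite eq_sym; exact: cq.
have H3 : beats tau (upd (upd V p i) q j) z xp.
  by apply: winner_beats; rewrite eq_sym.
by rewrite zw in H3; case: (beats_asym H2 H3).
Qed.

Lemma core m n (tau : vote m) (V : profile m n) p q i j :
  p != q -> GS_manipulation tau V p i -> GS_manipulation tau V q j ->
  let w := plurality tau V in
  let xp := plurality tau (upd V p i) in
  let xq := plurality tau (upd V q j) in
  let z := plurality tau (upd (upd V p i) q j) in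
  z != xp -> z != xq -> [/\ z = w, V q xp == ord0 & V p xq == ord0].
Proof.
move=> pq Mp Mq w xp xq z zp zq.
case: (coreA pq Mp Mq zp zq) => zw h1; split => //.
have qp : q != p by rewrite eq_sym.
have := coreA qp Mq Mp; rewrite /= -(upd_comm V i j pq) -/z.
by move=> /(_ zq zp) [].
Qed.

Lemma not_realizable_i_vi t : (t = T_i \/ t = T_vi) -> ~ realizable t.
Proof.
move=> ht [m [n [tau [V [p1 [p2 [i1 [i2 [[pq _ M1 M2] Ht]]]]]]]]].
have pq' : p1 != p2 by apply/eqP.
have qp' : p2 != p1 by rewrite eq_sym.
move: Ht; rewrite /game_type_of /rho1 /rho2 /W.
rewrite (@upd_same _ _ (upd V p1 i1) p2 (V p2)); last by rewrite ffunE (negbTE qp').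
rewrite (@upd_same _ _ V p1 (V p1)) //.
have := core pq' M1 M2.
set w := plurality tau V; set x1 := plurality tau (upd V p1 i1);
set x2 := plurality tau (upd V p2 i2); set z := plurality tau (upd (upd V p1 i1) p2 i2).
move=> C.
rewrite /cmp.
case: (eqVneq z x2) => [e2|n2]; case: (eqVneq z x1) => [e1|n1];
  try (by case: ifP; case: ht => ->);
  try (by case: ifP => _; case: ht => ->); try (by case: ht => ->).
case: (C n1 n2) => zw /eqP h1 /eqP h2.
rewrite /prefers zw h1 h2 !ltn0.
by case: ht => ->.
Qed.

Definition validr (m : nat) (r : seq nat) : bool := perm_eq r (iota 0 m.+1).

Lemma valid_index m r (c : 'I_m.+1) : validr m r -> index (val c) r < m.+1.
Proof.
move=> vr; have e : size r = m.+1 by rewrite (perm_size vr) size_iota.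
by rewrite -[X in _ < X]e index_mem (perm_mem vr) mem_iota /= ltn_ord.
Qed.

Lemma valid_inj m r (vr : validr m r) :
  injective (fun c : 'I_m.+1 => (inord (index (val c) r) : 'I_m.+1)).
Proof.
move=> c d /(congr1 (@nat_of_ord _)); rewrite !inordK ?valid_index // => e.
apply: val_inj; have := congr1 (nth 0 r) e.
by rewrite !nth_index // (perm_mem vr) mem_iota /= ltn_ord.
Qed.

Definition mkf m (r : seq nat) (c : 'I_m.+1) : 'I_m.+1 :=
  if validr m r then inord (index (val c) r) else c.

Lemma mkf_inj m r : injective (@mkf m r).
Proof.
move=> c d; rewrite /mkf; case: ifP => vr //; exact: valid_inj vr c d.
Qed.

Definition mkvote m (r : seq nat) : vote m := perm (@mkf_inj m r).

Lemma mkvoteE m r (H : validr m r) (c : 'I_m.+1) : val (mkvote m r c) = index (val c) r.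
Proof.
by rewrite /mkvote permE /mkf H /= inordK ?valid_index.
Qed.

Lemma mkvote_top m r (H : validr m r) (c : 'I_m.+1) :
  (mkvote m r c == ord0) = (head 0 r == val c).
Proof.
rewrite -(inj_eq val_inj) /= mkvoteE //.
case: r H => [|x r] H.
  by move: (perm_size H); rewrite size_iota.
by rewrite /= eq_sym; case: (x == val c).
Qed.

Lemma mkvote_pref m r (H : validr m r) (a b : 'I_m.+1) :
  prefers (mkvote m r) a b = (index (val a) r < index (val b) r).
Proof. by rewrite /prefers !mkvoteE. Qed.

Definition TOPS m n (X : profile m n) (t : seq nat) :=
  forall (i : 'I_n) (c : 'I_m.+1), (X i c == ord0) = (nth 0 t i == val c).

Lemma TOPS_upd m n (X : profile m n) t (i : 'I_n) (v : vote m) k :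
  TOPS X t -> (forall c, (v c == ord0) = (k == val c)) ->
  TOPS (upd X i v) (set_nth 0 t i k).
Proof.
move=> HX Hv j c; rewrite /upd ffunE nth_set_nth /=.
case: (eqVneq j i) => [->|ne]; first by rewrite eqxx.
have ne' : (val j == val i) = false by apply/negbTE.
by rewrite ne'.
Qed.

Lemma top_exists m (v : vote m) :
  exists k, k < m.+1 /\ forall c, (v c == ord0) = (k == val c).
Proof.
exists (val ((v^-1)%g ord0)); split; first exact: ltn_ord.
move=> c; rewrite (inj_eq val_inj); apply/eqP/eqP => h.
  by rewrite -h permK.
by rewrite -h permKV.
Qed.

Lemma card_ord_count n (P : pred nat) : #|[pred i : 'I_n | P (val i)]| = count P (iota 0 n).
Proof.
rewrite cardE /enum_mem size_filter -enumT -val_enum_ord count_map.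
by apply: eq_count.
Qed.

Definition cnt n (t : seq nat) (c : nat) := count (fun i => nth 0 t i == c) (iota 0 n).

Lemma score_cnt m n (X : profile m n) t c : TOPS X t -> score X c = cnt n t c.
Proof.
move=> HX; rewrite /score /cnt -(card_ord_count n (fun i => nth 0 t i == c)).
by apply: eq_card => i; rewrite !inE HX.
Qed.

Definition beatsN n (t tr : seq nat) (a b : nat) : bool :=
  (cnt n t b < cnt n t a) || ((cnt n t b == cnt n t a) && (index a tr < index b tr)).
Definition isWin m n t tr w := all (fun d => (d == w) || beatsN n t tr w d) (iota 0 m.+1).
Definition winN m n t tr := head 0 [seq w <- iota 0 m.+1 | isWin m n t tr w].

Lemma winN_correct m n (X : profile m n) t tr :
  validr m tr -> TOPS X t -> val (plurality (mkvote m tr) X) = winN m n t tr.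
Proof.
move=> vtr HX.
set tau := mkvote m tr; set p := plurality tau X.
have Hb : forall a b : 'I_m.+1, beats tau X a b = beatsN n t tr a b.
  by move=> a b; rewrite /beats /beatsN !(score_cnt _ HX) !mkvoteE.
have P1 : isWin m n t tr (val p).
  apply/allP => d; rewrite mem_iota /= => dlt.
  case: (eqVneq d (val p)) => [//|ne] /=.
  have ne' : Ordinal dlt != p by [].
  by rewrite -(Hb p (Ordinal dlt)); apply: winner_beats.
have U : forall w, w < m.+1 -> isWin m n t tr w -> w = val p.
  move=> w wlt /allP Hw.
  suff -> : p = Ordinal wlt by [].
  apply: plurality_unique => d ne.
  have := Hw (val d); rewrite mem_iota /= ltn_ord => /(_ isT).
  case/orP => [/eqP e|h].
    by case/eqP: ne; apply: val_inj.
  by rewrite Hb.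
rewrite /winN.
have : val p \in [seq w <- iota 0 m.+1 | isWin m n t tr w].
  by rewrite mem_filter P1 mem_iota /= ltn_ord.
case E : [seq w <- iota 0 m.+1 | isWin m n t tr w] => [//|x L] _ /=.
have : x \in [seq w <- iota 0 m.+1 | isWin m n t tr w] by rewrite E mem_head.
rewrite mem_filter mem_iota /= => /andP [Hx xlt].
by rewrite (U x xlt Hx).
Qed.

Definition mkprof m n (R : seq (seq nat)) : profile m n :=
  [ffun i : 'I_n => mkvote m (nth [::] R i)].

Lemma valid_nth m n R (i : 'I_n) : all (validr m) R -> n <= size R -> validr m (nth [::] R i).
Proof.
move=> /allP H nR; apply: H; apply: mem_nth; exact: leq_trans (ltn_ord i) nR.
Qed.

Lemma TOPS_mkprof m n R : all (validr m) R -> n <= size R ->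
  TOPS (mkprof m n R) (map (head 0) R).
Proof.
move=> vR nR i c; rewrite /mkprof ffunE mkvote_top ?(valid_nth _ vR nR) //.
by rewrite (nth_map [::]) // (leq_trans (ltn_ord i) nR).
Qed.

Definition pref (r : seq nat) a b := index a r < index b r.
Definition outc m n tr (R : seq (seq nat)) i k := winN m n (set_nth 0 (map (head 0) R) i k) tr.
Definition w0 m n tr (R : seq (seq nat)) := winN m n (map (head 0) R) tr.

Definition nonmanipN m n tr R i :=
  all (fun k => ~~ pref (nth [::] R i) (outc m n tr R i k) (w0 m n tr R)) (iota 0 m.+1).

Definition GSokN m n tr R i k :=
  pref (nth [::] R i) (outc m n tr R i k) (w0 m n tr R) &&
  all (fun k' => (outc m n tr R i k' == outc m n tr R i k) ||
                 pref (nth [::] R i) (outc m n tr R i k) (outc m n tr R i k')) (iota 0 m.+1).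

Lemma nonmanip_sound m n R tr (i : 'I_n) :
  validr m tr -> all (validr m) R -> n <= size R -> nonmanipN m n tr R i ->
  ~ GS_manipulator (mkvote m tr) (mkprof m n R) i.
Proof.
move=> vtr vR nR /allP H [v [Hpref _]].
have [k [klt Hk]] := top_exists v.
have T := TOPS_mkprof vR nR.
have e1 := winN_correct vtr (TOPS_upd i T Hk).
have e0 := winN_correct vtr T.
move: Hpref; rewrite {1}/mkprof ffunE mkvote_pref ?(valid_nth _ vR nR) // e1 e0.
have := H k; rewrite mem_iota /= klt => /(_ isT).
by rewrite /pref /outc /w0 => /negbTE ->.
Qed.

Lemma GS_sound m n R tr (i : 'I_n) r :
  validr m tr -> all (validr m) R -> n <= size R -> validr m r ->
  GSokN m n tr R i (head 0 r) ->
  GS_manipulation (mkvote m tr) (mkprof m n R) i (mkvote m r).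
Proof.
move=> vtr vR nR vr /andP [H1 /allP H2].
have Hk : forall c, (mkvote m r c == ord0) = (head 0 r == val c) by move=> c; rewrite mkvote_top.
have T := TOPS_mkprof vR nR.
have e1 := winN_correct vtr (TOPS_upd i T Hk).
have e0 := winN_correct vtr T.
have vi := valid_nth i vR nR.
split.
  by rewrite {1}/mkprof ffunE mkvote_pref // e1 e0.
move=> v''.
have [k [klt Hk']] := top_exists v''.
have e2 := winN_correct vtr (TOPS_upd i T Hk').
have := H2 k; rewrite mem_iota /= klt => /(_ isT) /orP [E|E].
  by left; apply: val_inj; rewrite e2 e1; apply/eqP.
by right; rewrite {1}/mkprof ffunE mkvote_pref // e2 e1.
Qed.

Definition cmpN (r : seq nat) (x y : nat) : sign :=
  if x == y then Zero else if pref r x y then Plus else Minus.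

Lemma cmp_mk m r (H : validr m r) (x y : 'I_m.+1) : cmp (mkvote m r) x y = cmpN r x y.
Proof. by rewrite /cmp /cmpN -(inj_eq val_inj) mkvote_pref. Qed.

Lemma realize_sound m n R tr (p1 p2 : 'I_n) r1 r2 t :
  validr m tr -> all (validr m) R -> n <= size R -> validr m r1 -> validr m r2 ->
  p1 != p2 ->
  GSokN m n tr R p1 (head 0 r1) -> GSokN m n tr R p2 (head 0 r2) ->
  all (fun i => (i == val p1) || (i == val p2) || nonmanipN m n tr R i) (iota 0 n) ->
  (let t0 := map (head 0) R in
   type_of
     (cmpN (nth [::] R p1) (winN m n (set_nth 0 (set_nth 0 t0 p1 (head 0 r1)) p2 (head 0 r2)) tr)
                           (winN m n (set_nth 0 (set_nth 0 t0 p1 (nth 0 t0 p1)) p2 (head 0 r2)) tr))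
     (cmpN (nth [::] R p2) (winN m n (set_nth 0 (set_nth 0 t0 p1 (head 0 r1)) p2 (head 0 r2)) tr)
                           (winN m n (set_nth 0 (set_nth 0 t0 p1 (head 0 r1)) p2 (nth 0 t0 p2)) tr))
   = t) ->
  realizable t.
Proof.
move=> vtr vR nR vr1 vr2 pq G1 G2 Hall Ht.
exists m, n, (mkvote m tr), (mkprof m n R), p1, p2, (mkvote m r1), (mkvote m r2).
have M1 := GS_sound vtr vR nR vr1 G1.
have M2 := GS_sound vtr vR nR vr2 G2.
split.
  split => //; first by apply/eqP.
  move=> i; split.
    move=> Hm; move/allP: Hall => /(_ (val i)); rewrite mem_iota /= ltn_ord => /(_ isT).
    case/orP => [/orP [/eqP e|/eqP e]|nm].
    - by left; apply: val_inj.
    - by right; apply: val_inj.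
    - by case: (nonmanip_sound vtr vR nR nm Hm).
  by case=> ->; [exists (mkvote m r1) | exists (mkvote m r2)].
rewrite -Ht /game_type_of /rho1 /rho2 /W.
have T := TOPS_mkprof vR nR.
have Hk1 : forall c, (mkvote m r1 c == ord0) = (head 0 r1 == val c) by move=> c; rewrite mkvote_top.
have Hk2 : forall c, (mkvote m r2 c == ord0) = (head 0 r2 == val c) by move=> c; rewrite mkvote_top.
have Hs : forall p : 'I_n, forall c, (mkvote m (nth [::] R p) c == ord0) = (nth 0 (map (head 0) R) p == val c).
  by move=> p c; rewrite -T /mkprof ffunE.
have mkprofE : forall p, mkprof m n R p = mkvote m (nth [::] R p) by move=> p; rewrite ffunE.
rewrite !mkprofE !cmp_mk ?(valid_nth _ vR nR) //.
rewrite (winN_correct vtr (TOPS_upd p2 (TOPS_upd p1 T Hk1) Hk2)).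
rewrite (winN_correct vtr (TOPS_upd p2 (TOPS_upd p1 T (Hs p1)) Hk2)).
rewrite (winN_correct vtr (TOPS_upd p2 (TOPS_upd p1 T Hk1) (Hs p2))).
by [].
Qed.

Lemma real_ii : realizable T_ii.
Proof.
apply: (@realize_sound 2 4 [:: [:: 0;1;2]; [:: 0;1;2]; [:: 1;2;0]; [:: 2;1;0]] [:: 1;2;0]
          (@Ordinal 4 2 isT) (@Ordinal 4 3 isT) [:: 2;1;0] [:: 1;2;0]); by vm_compute.
Qed.

Lemma real_iii : realizable T_iii.
Proof.
apply: (@realize_sound 2 5 [:: [:: 0;1;2]; [:: 0;1;2]; [:: 1;0;2]; [:: 2;1;0]; [:: 2;1;0]] [:: 1;0;2]
          (@Ordinal 5 3 isT) (@Ordinal 5 4 isT) [:: 1;0;2] [:: 1;0;2]); by vm_compute.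
Qed.

Lemma real_iv : realizable T_iv.
Proof.
apply: (@realize_sound 3 6 [:: [:: 0;1;2;3]; [:: 0;1;2;3]; [:: 1;0;2;3]; [:: 2;0;1;3]; [:: 3;1;2;0]; [:: 3;2;1;0]] [:: 1;2;0;3]
          (@Ordinal 6 4 isT) (@Ordinal 6 5 isT) [:: 1;0;2;3] [:: 2;0;1;3]); by vm_compute.
Qed.

Lemma real_v : realizable T_v.
Proof.
apply: (@realize_sound 3 5 [:: [:: 0;1;2;3]; [:: 0;1;2;3]; [:: 3;1;2;0]; [:: 1;2;0;3]; [:: 2;0;1;3]] [:: 1;2;0;3]
          (@Ordinal 5 2 isT) (@Ordinal 5 3 isT) [:: 1;0;2;3] [:: 2;0;1;3]); by vm_compute.
Qed.

Theorem mainTheorem5 :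
  (realizable T_ii /\ realizable T_iii /\ realizable T_iv /\ realizable T_v) /\
  (~ realizable T_i /\ ~ realizable T_vi).
Proof.
split; first by split; [exact: real_ii | split; [exact: real_iii | split; [exact: real_iv | exact: real_v]]].
by split; apply: not_realizable_i_vi; [left | right].
Qed.
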